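(* Let $\mathcal{H}$ be an infinite-dimensional separable Hilbert space with orthonormal bases $\{e_n\}$, $\{f_n\}$, $\mathcal{D}_e=\mathrm{span}\{e_n\}$, $\mathcal{D}_f=\mathrm{span}\{f_n\}$, $\mathcal{D}_e^2=\mathrm{span}\{|e_k\rangle\langle e_\ell|\}$. Let $\mathcal{Q}$ be a completely positive map from $\mathcal{D}_e^2$ into sesquilinear forms on $\mathcal{D}_f$ represented as $\mathcal{Q}(\rho)=\sum_\alpha K_\alpha\rho K_\alpha^\dagger$ by a countable family of generalized operators $K_\alpha$. If $\mathcal{Q}$ maps $\mathcal{D}_e^2$ into $\mathcal{B}(\mathcal{H})$ (i.e. each form $\mathcal{Q}(\rho)$ is given on $\mathcal{D}_f$ by a bounded operator), then each $K_\alpha$ maps $\mathcal{D}_e$ into $\mathcal{H}$.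
   Context: A generalized operator $K$ is a linear map from $\mathcal{D}_e$ into the conjugate algebraic dual of $\mathcal{D}_f$; write $\langle f|K|e\rangle$ for the value of $Ke$ at $f\in\mathcal{D}_f$, and $\langle e|K^\dagger|f\rangle=\langle f|K|e\rangle^*$. The representation $\mathcal{Q}(\rho)=\sum_\alpha K_\alpha\rho K_\alpha^\dagger$ means $\langle g|\mathcal{Q}(|\phi\rangle\langle\phi'|)|f\rangle=\sum_\alpha\langle g|K_\alpha|\phi\rangle\langle f|K_\alpha|\phi'\rangle^*$ for $\phi,\phi'\in\mathcal{D}_e$, $f,g\in\mathcal{D}_f$. Complete positivity: $\sum_{k,\ell}\langle\psi_k|\mathcal{Q}(|\phi_k\rangle\langle\phi_\ell|)|\psi_\ell\rangle\ge0$ for all finite families $\phi_k\in\mathcal{D}_e$, $\psi_k\in\mathcal{D}_f$. ''$K$ maps $\mathcal{D}_e$ into $\mathcal{H}$'' means each functional $Ke$ is of the form $f\mapsto\langle f|v\rangle$ with $v\in\mathcal{H}$. *)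

(* Defs.v *)
From HB Require Import structures.
From mathcomp Require Import all_boot all_order all_algebra.
From mathcomp Require Import reals.
From mathcomp Require Export complex.
Set Implicit Arguments. Unset Strict Implicit. Unset Printing Implicit Defensive.
Import Order.TTheory GRing.Theory Num.Theory.
Local Open Scope ring_scope.

Section Hilbert.
Variable R : realType.
Local Notation C := (R[i]).
Variable V : lmodType C.
(* ip x y = <x|y> : antilinear in x, linear in y (physics convention). *)
Variable ip : V -> V -> C.

Definition normH (x : V) : C := sqrtC (ip x x).

Definition is_hilbert : Prop :=
  [/\ (forall a x y z, ip x (a *: y + z) = a * ip x y + ip x z),
      (forall x y, ip x y = (ip y x)^*),
      (forall x, 0 <= ip x x),
      (forall x, ip x x = 0 -> x = 0) &
      (forall u : nat -> V,
         (forall eps : C, 0 < eps -> exists N, forall m n,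
              (N <= m)%N -> (N <= n)%N -> normH (u m - u n) < eps) ->
         exists l : V, forall eps : C, 0 < eps -> exists N, forall n,
              (N <= n)%N -> normH (u n - l) < eps)].

Definition in_span (e : nat -> V) (x : V) : Prop :=
  exists (N : nat) (c : nat -> C), x = \sum_(i < N) c i *: e i.

Definition is_ONB (e : nat -> V) : Prop :=
  (forall m n, ip (e m) (e n) = (m == n)%:R) /\
  (forall x eps, 0 < eps -> exists y, in_span e y /\ normH (x - y) < eps).

Definition bounded_op (B : V -> V) : Prop :=
  (forall a x y, B (a *: x + y) = a *: B x + B y) /\
  exists M : C, forall x, normH (B x) <= M * normH x.

Definition ketbra (phi phi' : V) : V -> V := fun x => ip phi' x *: phi.

Definition in_De2 (e : nat -> V) (rho : V -> V) : Prop :=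
  exists (N : nat) (c : nat -> nat -> C),
    forall x, rho x = \sum_(k < N) \sum_(l < N) c k l *: ketbra (e k) (e l) x.

(* A generalized operator K : D_e -> (D_f)^*, encoded as K f phi = <f|K|phi>,
   linear in phi in D_e and antilinear in f in D_f (values outside the
   spans are irrelevant). *)
Definition gen_op (e f : nat -> V) (K : V -> V -> C) : Prop :=
  (forall a g phi psi, in_span f g -> in_span e phi -> in_span e psi ->
      K g (a *: phi + psi) = a * K g phi + K g psi) /\
  (forall a g h phi, in_span f g -> in_span f h -> in_span e phi ->
      K (a *: g + h) phi = a^* * K g phi + K h phi).

Definition cvgC (u : nat -> C) (l : C) : Prop :=
  forall eps : C, 0 < eps -> exists N, forall n, (N <= n)%N -> `|u n - l| < eps.

End Hilbert.

(* Main.v *)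
Require Import Defs.
From HB Require Import structures.
From mathcomp Require Import all_boot all_order all_algebra.
From mathcomp Require Import reals complex classical_sets ring.
Import Order.TTheory GRing.Theory Num.Theory.
Local Open Scope ring_scope.
Set Implicit Arguments. Unset Strict Implicit.
Lemma incr_le (R : realType) (s : nat -> R) : (forall n, s n <= s n.+1) ->
  forall n m, (n <= m)%N -> s n <= s m.
Proof.
move=> inc n m /subnK <-; elim: (m - n)%N => [|k IH]; first by rewrite add0n.
by apply: le_trans IH _; rewrite addSn.
Qed.

Lemma incr_cauchy (R : realType) (s : nat -> R) M :
  (forall n, s n <= s n.+1) -> (forall n, s n <= M) ->
  forall eps, 0 < eps -> exists N, forall n m, (N <= n)%N -> (n <= m)%N ->
    s m - s n < eps.
Proof.
move=> inc bnd eps eps0.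
have hs : has_sup (range s).
  split; first by exists (s 0%N), 0%N.
  by exists M => _ [n _ <-].
have [_ [N _ <-] HN] := sup_adherent eps0 hs.
exists N => n m Nn nm.
have h1 : s m <= sup (range s) by apply: sup_upper_bound => //; exists m.
have h2 : s N <= s n by apply: incr_le.
rewrite ltrBlDr in HN.
rewrite ltrBlDr; apply: (le_lt_trans h1); apply: (lt_le_trans HN).
by rewrite addrC lerD2l.
Qed.
Lemma incr_leG (R : numDomainType) (s : nat -> R) : (forall n, s n <= s n.+1) ->
  forall n m, (n <= m)%N -> s n <= s m.
Proof.
move=> inc n m /subnK <-; elim: (m - n)%N => [|k IH]; first by rewrite add0n.
by apply: le_trans IH _; rewrite addSn.
Qed.

Lemma cvg_incr_norm (R : realType) (w : nat -> R[i]) L :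
  (forall n, 0 <= w n) -> (forall n, w n <= w n.+1) -> cvgC w L ->
  forall n, w n <= `|L|.
Proof.
move=> w0 inc cv n; apply/ler_addgt0Pr => eps e0.
have [N HN] := cv eps e0.
have h1 : w n <= w (maxn N n) by apply: incr_leG => //; rewrite leq_maxr.
apply: (le_trans h1).
rewrite -(ger0_norm (w0 _)).
have -> : w (maxn N n) = L + (w (maxn N n) - L) by rewrite addrC subrK.
apply: (le_trans (ler_normD _ _)); rewrite lerD2l; apply: ltW; apply: HN.
by rewrite leq_maxl.
Qed.

Lemma incr_cauchyC (R : realType) (S : nat -> R[i]) M :
  (forall n, 0 <= S n) -> (forall n, S n <= S n.+1) -> (forall n, S n <= M) ->
  forall eps, 0 < eps -> exists N, forall n m, (N <= n)%N -> (n <= m)%N ->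
    S m - S n < eps.
Proof.
move=> S0 inc bnd eps e0.
have Sr n : S n = (complex.Re (S n))%:C%C by rewrite RRe_real // ger0_real.
have Mr : M = (complex.Re M)%:C%C.
  by rewrite RRe_real // ger0_real // (le_trans (S0 0%N) (bnd 0%N)).
have er : eps = (complex.Re eps)%:C%C by rewrite RRe_real // ger0_real // ltW.
have i1 : forall n, complex.Re (S n) <= complex.Re (S n.+1).
  by move=> n; rewrite -lecR -!Sr.
have i2 : forall n, complex.Re (S n) <= complex.Re M.
  by move=> n; rewrite -lecR -Sr -Mr.
have i3 : 0 < complex.Re eps by rewrite -ltcR -er.
have [N HN] := @incr_cauchy R _ _ i1 i2 _ i3.
exists N => n m Nn nm; rewrite (Sr m) (Sr n) er -rmorphB /= ltcR; exact: HN.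
Qed.
Section IP.
Variables (R : realType) (V : lmodType R[i]) (ip : V -> V -> R[i]).
Hypothesis linr : forall a x y z, ip x (a *: y + z) = a * ip x y + ip x z.
Hypothesis sym : forall x y, ip x y = (ip y x)^*.
Hypothesis pos : forall x, 0 <= ip x x.
Hypothesis def : forall x, ip x x = 0 -> x = 0.

Lemma ipr0 x : ip x 0 = 0.
Proof.
have := linr 1 x 0 0; rewrite scaler0 addr0 mul1r => h.
by apply: (addrI (ip x 0)); rewrite addr0 -h.
Qed.
Lemma iprD x y z : ip x (y + z) = ip x y + ip x z.
Proof. by have := linr 1 x y z; rewrite scale1r mul1r. Qed.
Lemma iprZ a x y : ip x (a *: y) = a * ip x y.
Proof. by rewrite -[a *: y]addr0 linr ipr0 addr0. Qed.
Lemma iprN x y : ip x (- y) = - ip x y.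
Proof. by rewrite -scaleN1r iprZ mulN1r. Qed.
Lemma iprB x y z : ip x (y - z) = ip x y - ip x z.
Proof. by rewrite iprD iprN. Qed.
Lemma iplD x y z : ip (y + z) x = ip y x + ip z x.
Proof. by rewrite [ip y x]sym [ip z x]sym sym iprD rmorphD. Qed.
Lemma iplZ a x y : ip (a *: y) x = a^* * ip y x.
Proof. by rewrite [ip y x]sym sym iprZ rmorphM. Qed.
Lemma iplN x y : ip (- y) x = - ip y x.
Proof. by rewrite [ip y x]sym sym iprN rmorphN. Qed.
Lemma iplB x y z : ip (y - z) x = ip y x - ip z x.
Proof. by rewrite iplD iplN. Qed.
Lemma ipl0 x : ip 0 x = 0.
Proof. by rewrite sym ipr0 rmorph0. Qed.

Lemma ipr_sum x N (c : nat -> R[i]) (g : nat -> V) :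
  ip x (\sum_(i < N) c i *: g i) = \sum_(i < N) c i * ip x (g i).
Proof.
elim: N => [|N IH]; first by rewrite !big_ord0 ipr0.
by rewrite !big_ord_recr /= iprD IH iprZ.
Qed.
Lemma ipl_sum x N (c : nat -> R[i]) (g : nat -> V) :
  ip (\sum_(i < N) c i *: g i) x = \sum_(i < N) (c i)^* * ip (g i) x.
Proof.
elim: N => [|N IH]; first by rewrite !big_ord0 ipl0.
by rewrite !big_ord_recr /= iplD IH iplZ.
Qed.

Lemma ip_real x : ip x x \is Num.real.
Proof. exact: ger0_real. Qed.

Lemma CS x y : `|ip x y| <= normH ip x * normH ip y.
Proof.
rewrite /normH.
have [/eqP d0|d0] := eqVneq (ip y y) 0.
  rewrite (@def y (eqP d0)) ipr0 normr0; apply: mulr_ge0; by rewrite sqrtC_ge0.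
have dpos : 0 < ip y y by rewrite lt_def d0 pos.
have dc : (ip y y)^* = ip y y by apply: conj_Creal; apply: ger0_real.
pose t := ip y x / ip y y.
have H := pos (x - t *: y).
rewrite iplB iprB iprB iplZ iprZ iplZ iprZ in H.
rewrite /t [ip y x]sym in H.
set q := ip x y in H *; set d := ip y y in H d0 dpos dc *.
have E : (q^* / d)^* = q / d.
  by rewrite fmorph_div /= conjCK dc.
rewrite E in H.
have E2 : ip x x - q^* / d * q - (q / d * q^* - q / d * (q^* / d * d)) =
   ip x x - `|q| ^+ 2 / d by rewrite normCK; field.
rewrite E2 subr_ge0 ler_pdivrMr // in H.
rewrite -(sqrCK (normr_ge0 _)) -sqrtCM ?nnegrE //.
rewrite ler_sqrtC ?nnegrE //.
all: by rewrite ?mulr_ge0 ?exprn_ge0 ?pos ?(ltW dpos) ?normr_ge0.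
Qed.

Lemma normH_ge0 x : 0 <= normH ip x.
Proof. by rewrite sqrtC_ge0. Qed.
Lemma normH_sqr x : normH ip x ^+ 2 = ip x x.
Proof. exact: sqrtCK. Qed.
End IP.

Lemma delta_sum (R : realType) N (b : nat -> R[i]) m : (m < N)%N ->
  \sum_(j < N) b j * (m == j)%:R = b m.
Proof.
move=> mN; rewrite (bigD1 (Ordinal mN)) //= eqxx mulr1 big1 ?addr0 // => j ji.
have -> : (m == j) = false by apply/negbTE; rewrite eq_sym; exact: ji.
by rewrite mulr0.
Qed.

Lemma in_span_basis (R : realType) (V : lmodType R[i]) (f : nat -> V) n :
  in_span f (f n).
Proof.
exists n.+1, (fun i => (i == n)%:R); rewrite big_ord_recr /= eqxx scale1r.
rewrite big1 ?add0r // => i _; by rewrite (_ : (i == n :> nat) = false) ?scale0r //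
  ltn_eqF.
Qed.

Lemma in_span0 (R : realType) (V : lmodType R[i]) (f : nat -> V) : in_span f 0.
Proof. by exists 0%N, (fun _ => 0); rewrite big_ord0. Qed.

Lemma antilin_sum (R : realType) (V : lmodType R[i]) (f : nat -> V)
  (F : V -> R[i]) :
  (forall a g h, in_span f g -> in_span f h -> F (a *: g + h) = a^* * F g + F h) ->
  forall N (c : nat -> R[i]),
    F (\sum_(i < N) c i *: f i) = \sum_(i < N) (c i)^* * F (f i).
Proof.
move=> HF.
have F0 : F 0 = 0.
  have := HF 1 0 0 (in_span0 f) (in_span0 f).
  rewrite scaler0 addr0 rmorph1 mul1r => h.
  by apply: (addrI (F 0)); rewrite addr0 -h.
elim=> [|N IH] c; first by rewrite !big_ord0.
rewrite !big_ord_recr /= [X in F X]addrC HF; last first.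
- by exists N, c.
- exact: in_span_basis.
by rewrite IH addrC.
Qed.

Section ONB.
Variables (R : realType) (V : lmodType R[i]) (ip : V -> V -> R[i]) (f : nat -> V).
Hypothesis linr : forall a x y z, ip x (a *: y + z) = a * ip x y + ip x z.
Hypothesis sym : forall x y, ip x y = (ip y x)^*.
Hypothesis ortho : forall m n, ip (f m) (f n) = (m == n)%:R.

Lemma ip_f_sum m N (c : nat -> R[i]) : (m < N)%N ->
  ip (f m) (\sum_(i < N) c i *: f i) = c m.
Proof.
move=> mN; rewrite (ipr_sum linr) (eq_bigr (fun j : 'I_N => c j * (m == j)%:R)).
  exact: delta_sum.
by move=> j _; rewrite ortho.
Qed.
End ONB.

Unset Implicit Arguments.
Theorem corollary6p4 (R : realType) (V : lmodType R[i]) (ip : V -> V -> R[i])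
  (e f : nat -> V) (Q : (V -> V) -> V -> V -> R[i])
  (K : nat -> V -> V -> R[i]) :
  is_hilbert ip ->
  is_ONB ip e -> is_ONB ip f ->
  (forall a rho1 rho2 g h, in_De2 ip e rho1 -> in_De2 ip e rho2 ->
     in_span f g -> in_span f h ->
     Q (fun x => a *: rho1 x + rho2 x) g h = a * Q rho1 g h + Q rho2 g h) ->
  (forall rho a g g' h, in_De2 ip e rho ->
     in_span f g -> in_span f g' -> in_span f h ->
     Q rho (a *: g + g') h = a^* * Q rho g h + Q rho g' h /\
     Q rho h (a *: g + g') = a * Q rho h g + Q rho h g') ->
  (forall (n : nat) (phi psi : 'I_n -> V),
     (forall k, in_span e (phi k)) -> (forall k, in_span f (psi k)) ->
     0 <= \sum_(k < n) \sum_(l < n) Q (ketbra ip (phi k) (phi l)) (psi k) (psi l)) ->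
  (forall alpha, gen_op e f (K alpha)) ->
  (forall phi phi' g h, in_span e phi -> in_span e phi' ->
     in_span f g -> in_span f h ->
     cvgC (fun N => \sum_(alpha < N) K alpha g phi * (K alpha h phi')^*)
          (Q (ketbra ip phi phi') g h)) ->
  (forall rho, in_De2 ip e rho -> exists B : V -> V, bounded_op ip B /\
     forall g h, in_span f g -> in_span f h -> Q rho g h = ip g (B h)) ->
  forall alpha phi, in_span e phi ->
    exists v : V, forall g, in_span f g -> K alpha g phi = ip g v.
Proof.
move=> Hh Oe Of Qlin Qses CP Kgen Kraus Qbd alpha phi phie.
case: Hh => linr sym pos def compl.
case: Of => ortho _.
have Kl := (Kgen alpha).2.
pose F g := K alpha g phi.
have FA : forall a g h, in_span f g -> in_span f h ->
    F (a *: g + h) = a^* * F g + F h.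
  by move=> a g h gs hs; apply: Kl.
have Fsum := antilin_sum FA.
have [M HM] : exists M, forall g, in_span f g -> `|F g| ^+ 2 <= M * ip g g.
  have rhoD : in_De2 ip e (ketbra ip phi phi).
    have [Ne [a phiE]] := phie.
    exists Ne, (fun k l => a k * (a l)^*) => x.
    rewrite /ketbra phiE (ipl_sum linr sym) scaler_sumr; apply: eq_bigr => k _.
    rewrite scaler_suml; apply: eq_bigr => l _.
    by rewrite !scalerA; congr (_ *: _); ring.
  have [B [[_ [M HB]] HQ]] := Qbd _ rhoD.
  exists M => g gs.
  have cv := Kraus phi phi g g phie phie gs gs.
  rewrite HQ // in cv.
  have w0 : forall n, 0 <= \sum_(b < n) K b g phi * (K b g phi)^*.
    by move=> n; apply: sumr_ge0 => b _; exact: mul_conjC_ge0.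
  have winc : forall n, \sum_(b < n) K b g phi * (K b g phi)^* <=
      \sum_(b < n.+1) K b g phi * (K b g phi)^*.
    by move=> n; rewrite big_ord_recr /= lerDl mul_conjC_ge0.
  have h1 := cvg_incr_norm w0 winc cv alpha.+1.
  have h2 : `|F g| ^+ 2 <= `|ip g (B g)|.
    apply: le_trans h1; rewrite big_ord_recr /= normCK lerDr; exact: w0.
  apply: (le_trans h2).
  apply: le_trans (CS linr sym pos def g (B g)) _.
  have hb := HB g.
  have hb2 := ler_wpM2l (normH_ge0 pos g) hb.
  apply: le_trans hb2 _.
  by rewrite mulrCA -expr2 normH_sqr.
pose c n := F (f n).
pose u N := \sum_(i < N) c i *: f i.
pose S N := \sum_(i < N) `|c i| ^+ 2.
have ipfu : forall m N, (m < N)%N -> ip (f m) (u N) = c m.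
  by move=> m N mN; apply: (ip_f_sum linr ortho).
have ipuu : forall a b, (a <= b)%N -> ip (u a) (u b) = S a.
  move=> a b ab; rewrite /u (ipl_sum linr sym) /S; apply: eq_bigr => i _.
  rewrite ipfu ?normCKC //; exact: leq_trans (ltn_ord i) ab.
have S0 : forall n, 0 <= S n.
  by move=> n; apply: sumr_ge0 => i _; rewrite exprn_ge0 // normr_ge0.
have Sinc : forall n, S n <= S n.+1.
  by move=> n; rewrite /S big_ord_recr /= lerDl exprn_ge0 // normr_ge0.
have FU : forall N, F (u N) = S N.
  by move=> N; rewrite /u Fsum; apply: eq_bigr => i _; rewrite normCKC.
have Sbound : forall N, S N <= `|M|.
  move=> N; have h := HM (u N) (ex_intro _ N (ex_intro _ c erefl)).
  rewrite FU ipuu // (ger0_norm (S0 N)) in h.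
  have [->|Sn0] := eqVneq (S N) 0; first by rewrite normr_ge0.
  have Sp : 0 < S N by rewrite lt_def Sn0 S0.
  rewrite expr2 ler_pM2r // in h.
  apply: (le_trans h); apply: real_ler_norm; apply: ger0_real.
  exact: le_trans (S0 N) h.
have Cu : forall eps : R[i], 0 < eps -> exists N, forall m n,
    (N <= m)%N -> (N <= n)%N -> normH ip (u m - u n) < eps.
  move=> eps e0.
  have e2 : 0 < eps ^+ 2 by rewrite exprn_gt0.
  have [N HN] := incr_cauchyC S0 Sinc Sbound e2.
  exists N => m n Nm Nn.
  wlog nm : m n Nm Nn / (n <= m)%N.
    move=> W; case: (leqP n m) => [nm|/ltnW mn]; first exact: W.
    rewrite /normH -opprB (iplN linr sym) (iprN linr) opprK; exact: W.
  have dd : ip (u m - u n) (u m - u n) = S m - S n.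
    rewrite (iplB linr sym) !(iprB linr) ipuu // [ip (u m) (u n)]sym ipuu //.
    by rewrite conj_Creal ?ger0_real // ipuu // subrr subr0.
  rewrite /normH dd -(sqrCK (ltW e0)) ltr_sqrtC ?nnegrE ?subr_ge0 ?HN //.
    exact: incr_leG.
  by rewrite exprn_ge0 // ltW.
have [l Hl] := compl u Cu.
have ipfl : forall m, ip (f m) l = c m.
  move=> m; apply/eqP; rewrite -subr_eq0 -normr_eq0 eq_le normr_ge0 andbT.
  apply/ler_addgt0Pr => eps e0; rewrite add0r; apply: ltW.
  have [N HN] := Hl eps e0.
  have -> : ip (f m) l - c m = - ip (f m) (u (maxn N m.+1) - l).
    by rewrite (iprB linr) (ipfu m (maxn N m.+1)) ?opprB // leq_maxr.
  rewrite normrN; apply: le_lt_trans (CS linr sym pos def _ _) _.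
  rewrite /normH ortho eqxx sqrtC1 mul1r; apply: HN; exact: leq_maxl.
exists l => g [N [d ->]].
change (F (\sum_(i < N) d i *: f i) = ip (\sum_(i < N) d i *: f i) l).
rewrite Fsum (ipl_sum linr sym); apply: eq_bigr => i _; by rewrite ipfl.
Qed.
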